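(* Consider the game of degree $d = 3$ in which Nora and Wanda choose the polynomial coefficients from $\mathbb{Q}$. If Nora makes the last move, she can ensure that the final polynomial has no root in any abelian extension of $\mathbb{Q}$.
   Context: The game: Nora and Wanda alternately choose coefficients of $f(x) = a_3 x^3 + a_2 x^2 + a_1 x + a_0$; on each move the current player picks a not-yet-chosen coefficient and assigns it a rational value, subject to $a_3 \neq 0$, $a_0 \neq 0$. An abelian extension of $\mathbb{Q}$ is a Galois extension (inside a fixed algebraic closure) with abelian Galois group. *)

(* Defs.v *)
From HB Require Import structures.
From mathcomp Require Import all_boot all_order all_algebra all_fingroup all_solvable all_field.
Set Implicit Arguments. Unset Strict Implicit. Unset Printing Implicit Defensive.
Import GRing.Theory.
Local Open Scope ring_scope.

(* Game state for degree 3: coefficient a_i (i : 'I_4) is either not yet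
   chosen (None) or has been assigned the rational value c (Some c). *)
Definition state := 'I_4 -> option rat.

Definition init_state : state := fun _ => None.

Definition legal_move (s : state) (i : 'I_4) (c : rat) : Prop :=
  s i = None /\ (((i : nat) == 0%N) || ((i : nat) == 3%N) -> c != 0).

Definition play (s : state) (i : 'I_4) (c : rat) : state :=
  fun j => if j == i then Some c else s j.

(* The polynomial a_3 x^3 + a_2 x^2 + a_1 x + a_0 (unchosen coefficients
   are read as 0; after the four moves of the game all are chosen). *)
Definition state_poly (s : state) : {poly rat} :=
  \sum_(i < 4) (odflt 0 (s i))%:P * 'X^i.

(* p has a root in some abelian extension of Q: a field extension E of Q
   (realised as a subfield of a splitting-field extension L of Q) which is
   Galois over Q with abelian Galois group, containing a root of p. *)
Definition has_root_in_abelian_ext (p : {poly rat}) : Prop :=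
  exists (L : splittingFieldType rat) (E : {subfield L}) (x : L),
    [/\ galois 1%AS E, abelian 'Gal(E / 1%AS), x \in E
      & root (map_poly (in_alg L) p) x].

(* Main.v *)
Require Import Defs.
From HB Require Import structures.
From mathcomp Require Import all_boot all_order all_algebra all_fingroup all_solvable all_field.
From mathcomp Require Import polyrcf realalg.
From mathcomp Require Import ring lra zify.
Set Implicit Arguments. Unset Strict Implicit. Unset Printing Implicit Defensive.
Import Order.TTheory GRing.Theory Num.Theory.
Local Open Scope ring_scope.

Lemma dvd_part (L : splittingFieldType rat) (x : L) (p : {poly rat}) :
  root (map_poly (in_alg L) p) x -> irreducible_poly p ->
  (forall h : {poly rat}, root (map_poly (in_alg L) h) x -> p %| h)
  /\ size (minPoly 1%AS x) = size p.
Proof.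
move=> rx irr.
have /polyOver1P[m0 Hm0] := minPolyOver 1%AS x.
have pOv : map_poly (in_alg L) p \is a polyOver 1%AS by apply/polyOver1P; exists p.
have m0p : minPoly 1%AS x %| map_poly (in_alg L) p := minPoly_dvdp pOv rx.
rewrite Hm0 dvdp_map in m0p.
have szm0 : size m0 != 1%N.
  by rewrite -(size_map_poly (in_alg L)) -Hm0 size_minPoly.
have eqm : m0 %= p by case: irr => _ /(_ m0 szm0 m0p).
split; last by rewrite Hm0 size_map_poly (eqp_size eqm).
move=> h rh.
have hOv : map_poly (in_alg L) h \is a polyOver 1%AS by apply/polyOver1P; exists h.
have m0h : minPoly 1%AS x %| map_poly (in_alg L) h := minPoly_dvdp hOv rh.
rewrite Hm0 dvdp_map in m0h.
by rewrite -(eqp_dvdl _ eqm).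
Qed.
Lemma other_root (L : splittingFieldType rat) (E : {subfield L}) (x : L) :
  galois 1%AS E -> abelian 'Gal(E / 1%AS) -> x \in E ->
  (3 <= size (minPoly 1%AS x))%N ->
  exists2 y, y \in <<1%AS; x>>%VS & root (minPoly 1%AS x) y /\ y != x.
Proof.
move=> galE abE xE szm.
set F := <<1%AS; x>>%AS.
have sFE : (F <= E)%VS by apply/FadjoinP; split => //; exact: sub1v.
have s1F : (1%AS <= F)%VS by exact: sub1v.
have galFE : galois F E by apply: galoisS galE; rewrite s1F sFE.
have nsG : ('Gal(E / F) <| 'Gal(E / 1%AS))%g.
  by rewrite -sub_abelian_normal // galS.
have gal1F : galois 1%AS F.
  have := normal_fixedField_galois galE nsG.
  by rewrite (galois_fixedField galFE).
have xF : x \in F by exact: memv_adjoin.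
case/and3P: gal1F => _ sep1F nor1F.
have [r /allP rF mE] := normalFieldP nor1F x xF.
have sepx : separable_element 1%AS x by move/separableP: sep1F; apply.
have ur : uniq r by rewrite -separable_prod_XsubC -mE.
have : has (predC1 x) r.
  have [//|/hasPn hr] := boolP (has (predC1 x) r); exfalso.
  have : (size r <= size [:: x])%N.
    apply: (uniq_leq_size ur) => z zr; rewrite inE; have := hr z zr.
    by rewrite /= negbK.
  by move: szm; rewrite mE size_prod_XsubC /= ltnS; case: (size r) => [|[|]].
case/hasP => y yr /= yx; exists y; first exact: rF.
by rewrite mE root_prod_XsubC yr.
Qed.
Definition disc {R : comNzRingType} (a b c d : R) :=
  18%:R*a*b*c*d - 4%:R*b^+3*d + b^+2*c^+2 - 4%:R*a*c^+3 - 27%:R*a^+2*d^+2.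

Lemma disc_sq (F : fieldType) (A B C D x y : F) :
  A*x^+3+B*x^+2+C*x+D = 0 -> A*y^+3+B*y^+2+C*y+D = 0 -> x != y ->
  disc A B C D = ((x-y)*(2%:R*A*y+A*x+B)*(2%:R*A*x+A*y+B))^+2.
Proof.
move=> px py xy.
have hC : C = -(A*(x^+2+x*y+y^+2)) - B*(x+y).
  have : (x - y) * (A*(x^+2+x*y+y^+2) + B*(x+y) + C) = 0.
    by rewrite -[RHS](subrr 0) -{1}px -py; ring.
  move/eqP; rewrite mulf_eq0 subr_eq0 (negbTE xy) /= => /eqP h.
  by apply/eqP; rewrite -subr_eq0 -h; apply/eqP; ring.
have hD : D = -(A*x^+3+B*x^+2+C*x).
  by apply/eqP; rewrite -subr_eq0 -px; apply/eqP; ring.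
rewrite /disc hD hC; ring.
Qed.

Lemma disc_rmorph (R S : comNzRingType) (f : {rmorphism R -> S}) (a b c d : R) :
  f (disc a b c d) = disc (f a) (f b) (f c) (f d).
Proof. rewrite /disc !(rmorphB, rmorphD, rmorphM, rmorph_nat); ring. Qed.

Lemma fin_id (S : comNzRingType) (A B x y : S) :
  ((x - y) * ((1+1)*A*y + A*x + B) * ((1+1)*A*x + A*y + B))^+2
  - ((x - y) * (2%:R*A*y + A*x + B) * (2%:R*A*x+A*y+B))^+2 = 0.
Proof. ring. Qed.

Lemma horner_cub (R : comNzRingType) (f : {rmorphism rat -> R}) (a b c d : rat) z :
  (map_poly f (a%:P*'X^3 + b%:P*'X^2 + c%:P*'X + d%:P)).[z]
  = f a * z^+3 + f b * z^+2 + f c * z + f d.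
Proof.
rewrite !rmorphD !rmorphM /= !map_polyC map_polyX !hornerE; ring.
Qed.

Lemma size_cub (a b c d : rat) : a != 0 ->
  size (a%:P*'X^3 + b%:P*'X^2 + c%:P*'X + d%:P) = 4%N.
Proof.
move=> a0.
have -> : a%:P*'X^3 + b%:P*'X^2 + c%:P*'X + d%:P = Poly [:: d; c; b; a].
  by rewrite /= !cons_poly_def; ring.
by rewrite (PolyK (c := 0)) //=.
Qed.

Lemma no_abelian (a b c d : rat) : a != 0 ->
  (forall r : rat, a*r^+3+b*r^+2+c*r+d != 0) -> disc a b c d < 0 ->
  ~ has_root_in_abelian_ext (a%:P*'X^3 + b%:P*'X^2 + c%:P*'X + d%:P).
Proof.
move=> a0 nr dn; set p := (X in has_root_in_abelian_ext X).
move=> [L [E [x [galE abE xE rx]]]].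
have sz : size p = 4%N by exact: size_cub.
have irr : irreducible_poly p.
  apply: cubic_irreducible; first by rewrite sz.
  move=> r; rewrite /root.
  have := horner_cub idfun a b c d r; rewrite map_poly_id // => ->; exact: nr.
have [dvdx szmin] := dvd_part rx irr.
have szm3 : (3 <= size (minPoly 1%AS x))%N by rewrite szmin sz.
have [y yF [ry yx]] := other_root galE abE xE szm3.
have pOv : map_poly (in_alg L) p \is a polyOver 1%AS by apply/polyOver1P; exists p.
have ryp : root (map_poly (in_alg L) p) y.
  exact: root_dvdp (minPoly_dvdp pOv rx) ry.
have /Fadjoin_polyP[g1 g1O yE] := yF.
have /polyOver1P[g gE] := g1O.
set H := ('X - g) * ((2%:R * a)%:P * g + a%:P * 'X + b%:P)
                 * ((2%:R*a)%:P * 'X + a%:P * g + b%:P).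
have ph : p %| H ^+ 2 - (disc a b c d)%:P.
  apply: dvdx; rewrite /root.
  rewrite rmorphB rmorphXn /= map_polyC /= hornerD hornerN hornerC horner_exp.
  rewrite /H !rmorphM !rmorphB !rmorphD /= !map_polyC map_polyX -gE /=.
  rewrite !(hornerM, hornerD, hornerN, hornerC, hornerX) -yE.
  rewrite !(rmorphM, rmorphD, rmorph1, map_polyC, hornerM, hornerD, hornerC) /= -gE -yE.
  have hx := rx; have hy := ryp.
  rewrite /root !horner_cub in hx hy.
  rewrite !map_polyC map_polyX !hornerC hornerX.

  rewrite -[(disc a b c d)%:A]/(in_alg L (disc a b c d)) disc_rmorph.
  rewrite (disc_sq (eqP hx) (eqP hy)); last by rewrite eq_sym.
  apply/eqP; exact: fin_id.
pose f : {rmorphism rat -> realalg} := ratr.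
have [r rr] : {r : realalg | root (map_poly f p) r}.
  by apply: odd_poly_root; rewrite size_map_poly sz.
have pr : map_poly f p %| map_poly f (H ^+ 2 - (disc a b c d)%:P) by rewrite dvdp_map.
have := root_dvdp pr rr.
rewrite /root rmorphB rmorphXn /= map_polyC /= hornerD hornerN hornerC horner_exp.
rewrite subr_eq0 => /eqP hd.
have : ratr (disc a b c d) < 0 :> realalg by rewrite ltrq0.
by rewrite -hd ltNge sqr_ge0.
Qed.

Lemma eisZ (l : nat) (u v A B C E : int) : prime l -> coprime `|u| `|v| ->
  ~~ (l %| `|E|)%N -> ~~ (l %| `|A|)%N ->
  l%:Z * (A*u^+3 + B*u^+2*v + C*u*v^+2) + E*v^+3 = 0 -> False.
Proof.
move=> pl cuv nE nA eq.
have lv : (l %| `|v|)%N.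
  have : (l%:Z %| E * v^+3)%Z.
    have -> : E*v^+3 = - (l%:Z * (A*u^+3 + B*u^+2*v + C*u*v^+2)).
      by apply/eqP; rewrite -subr_eq0 opprK addrC eq.
    by rewrite rpredN dvdz_mulr // dvdzz.
  rewrite dvdzE abszM abszX Euclid_dvdM // (negbTE nE) /= Euclid_dvdX //.
  by case/andP.
have nu : ~~ (l %| `|u|)%N.
  apply/negP=> lu; have : (l %| gcdn `|u| `|v|)%N by rewrite dvdn_gcd lu lv.
  rewrite (eqP cuv) dvdn1 => /eqP l1; by rewrite l1 in pl.
have /dvdzP[w vw] : (l%:Z %| v)%Z by rewrite dvdzE.
have l0 : l%:Z != 0 by case: (l) pl.
have : l%:Z * (A*u^+3 + l%:Z*(B*u^+2*w + C*u*w^+2* l%:Z + E*w^+3* l%:Z)) = 0.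
  by rewrite -eq vw; ring.
move/eqP; rewrite mulf_eq0 (negbTE l0) /= => /eqP eq2.
have : (l%:Z %| A * u^+3)%Z.
  have -> : A*u^+3 = - (l%:Z*(B*u^+2*w + C*u*w^+2* l%:Z + E*w^+3* l%:Z)).
    by apply/eqP; rewrite -subr_eq0 opprK eq2.
  by rewrite rpredN dvdz_mulr // dvdzz.
rewrite dvdzE abszM abszX Euclid_dvdM // (negbTE nA) /= Euclid_dvdX //.
by rewrite (negbTE nu).
Qed.
Lemma key_id (F : fieldType) (l na da nb db nc dc u v M : F) :
  da != 0 -> db != 0 -> dc != 0 -> v != 0 -> l != 0 ->
  l*((na*db*dc)*u^+3 + (nb*da*dc)*u^+2*v + (nc*da*db)*u*v^+2) + (da*db*dc*(M * l + 1))*v^+3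
  = (l*(da*db*dc)*v^+3) * ((na/da)*(u/v)^+3 + (nb/db)*(u/v)^+2 + (nc/dc)*(u/v) + (M + l^-1)).
Proof. by move=> *; field; apply/and5P; split. Qed.

Lemma disc_bound (s D M be ga Be Ga : rat) : 0 <= (D - M) * (s * D) ->
  0 < (s*M - (Be+Ga+1))*D -> 0 <= (Ga+1)*(D-1) -> 0 <= (Be - be)*D -> ga <= Ga ->
  -s*D^+2 + be*D + ga < 0.
Proof. move=> h1 h2 h3 h4 h5. lra. Qed.

Lemma ndvd_lt (l n : nat) : (0 < n)%N -> (n < l)%N -> ~~ (l %| n)%N.
Proof. by move=> n0 nl; rewrite gtnNdvd. Qed.

Lemma EP0 (a b c : rat) : a != 0 ->
  exists D : rat, [/\ D != 0, (forall r, a*r^+3+b*r^+2+c*r+D != 0) & disc a b c D < 0].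
Proof.
move=> a0.
pose K := (`|numq a| + `|denq a| + `|denq b| + `|denq c|)%N.
have [l Kl pl] := prime_above K.
pose be := 18%:R*a*b*c - 4%:R*b^+3.
pose ga := b^+2*c^+2 - 4%:R*a*c^+3.
have [M M1' HM] : exists2 M : nat, (0 < M)%N & (`|be| + `|ga| + 1) / (27%:R * a^+2) < M%:R.
  exists (Num.bound ((`|be| + `|ga| + 1) / (27%:R * a^+2))).+1; first exact: ltn0Sn.
  apply: (lt_le_trans (archi_boundP _)); last by rewrite ler_nat leqnSn.
  apply: divr_ge0; first by rewrite !addr_ge0 ?normr_ge0 ?ler01.
  by rewrite mulr_ge0 ?ler0n ?sqr_ge0.
pose D : rat := M%:R + (l%:R)^-1.
have l0 : (0 < l)%N by exact: prime_gt0.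
have lQ : (0 : rat) < l%:R by rewrite ltr0n.
have DM : M%:R <= D by rewrite /D lerDl invr_ge0 ltW.
have M1 : (1 : rat) <= M%:R by rewrite ler1n.
have D0 : 0 < D by apply: lt_le_trans DM; apply: lt_le_trans M1.
exists D; split.
- by rewrite gt_eqF.
- move=> r; apply/negP => /eqP hr.
  pose u := numq r; pose v := denq r.
  pose A := numq a * denq b * denq c.
  pose B := numq b * denq a * denq c.
  pose C := numq c * denq a * denq b.
  pose E := denq a * denq b * denq c * (M * l + 1)%N%:Z.
  have hE : ((l%:Z * (A*u^+3 + B*u^+2*v + C*u*v^+2) + E*v^+3)%:~R : rat) = 0.
    have KI := @key_id rat l%:R (numq a)%:~R (denq a)%:~R (numq b)%:~R (denq b)%:~R
       (numq c)%:~R (denq c)%:~R u%:~R v%:~R M%:R.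
    rewrite /u /v !divq_num_den -/D hr mulr0 in KI.
    rewrite /A /B /C /E !(intrD, intrM) -!pmulrn natrD natrM.
    apply: (etrans _ (KI _ _ _ _ _)); first ring;
      by rewrite ?intr_eq0 ?denq_neq0 ?pnatr_eq0 -?lt0n ?l0.
  move/eqP: hE; rewrite intr_eq0 => /eqP hE.
  apply: (eisZ pl _ _ _ hE); first exact: coprime_num_den.
  + have l1 : (l == 1)%N = false by case: (l) pl => [|[|]].
    rewrite /E !abszM !Euclid_dvdM // !negb_or /=.
    rewrite (dvdn_addr _ (dvdn_mull _ (dvdnn l))) dvdn1 l1 andbT.
    by rewrite !ndvd_lt ?absz_gt0 ?denq_neq0 //; apply: leq_ltn_trans Kl; rewrite /K; lia.
  + rewrite /A !abszM !Euclid_dvdM // !negb_or.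
    by rewrite !ndvd_lt ?absz_gt0 ?denq_neq0 ?numq_eq0 //; apply: leq_ltn_trans Kl; rewrite /K; lia.
- have s0 : (0 : rat) < 27%:R * a^+2 by rewrite mulr_gt0 ?ltr0n // exprn_even_gt0.
  have h1 : `|be| + `|ga| + 1 < 27%:R * a^+2 * M%:R.
    by rewrite mulrC -ltr_pdivrMr.
  have eqd : disc a b c D = -(27%:R*a^+2)*D^+2 + be*D + ga by rewrite /disc /be /ga; ring.
  rewrite eqd.
  move: (27%:R * a^+2) s0 h1 => s s0 h1.
  have f1 : 0 <= (D - M%:R) * (s * D) by rewrite mulr_ge0 ?subr_ge0 // mulr_ge0 ?ltW.
  have f2 : 0 < (s * M%:R - (`|be| + `|ga| + 1)) * D by rewrite mulr_gt0 ?subr_gt0.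
  have f3 : 0 <= (`|ga| + 1) * (D - 1).
    by apply: mulr_ge0; [rewrite addr_ge0 ?ler01 | rewrite subr_ge0 (le_trans M1 DM)].
  have f4 : 0 <= (`|be| - be) * D by rewrite mulr_ge0 ?subr_ge0 ?ler_norm // ltW.
  have f5 : ga <= `|ga| by rewrite ler_norm.
  exact: disc_bound f1 f2 f3 f4 f5.
Qed.


Lemma norm_same (x y : rat) : 0 <= x * y -> `|y| <= `|x + y|.
Proof.
move=> xy.
have [x0|x0] := leP 0 x; have [y0|y0] := leP 0 y.
- by rewrite !ger0_norm ?addr_ge0 // lerDr.
- have : x * y <= 0 by rewrite mulr_ge0_le0 // ltW.
  move=> h; have xy0 : x * y = 0 by apply/eqP; rewrite eq_le h xy.
  move/eqP: xy0; rewrite mulf_eq0 (lt_eqF y0) orbF => /eqP ->.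
  by rewrite add0r.
- have : x * y <= 0 by rewrite mulr_le0_ge0 // ltW.
  move=> h; have xy0 : x * y = 0 by apply/eqP; rewrite eq_le h xy.
  move/eqP: xy0; rewrite mulf_eq0 (lt_eqF x0) /= => /eqP ->.
  by rewrite addr0 normr0 normr_ge0.
- rewrite !ltr0_norm ?ltr_nDl //; lra.
Qed.

Lemma mp_bound (R Dd V U NA DD ND KK : rat) :
  0 <= KK * (U - 1) -> 0 <= KK * R * (NA * DD - V) -> 0 <= DD * (Dd - R * (NA * KK)) ->
  KK * U = KK * R * V -> DD * Dd = ND -> KK = ND + 1 -> False.
Proof. move=> p1 p2 p3 q1 q2 q3. lra. Qed.

Lemma neg_sum (X Y : rat) : 0 < X -> 0 <= Y -> -X - Y < 0.
Proof. move=> h1 h2; lra. Qed.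

Lemma key2 (F : fieldType) (na da nd dd u v n : F) :
  da != 0 -> dd != 0 -> v != 0 ->
  na*dd*u^+3 + n*da*dd*u*v^+2 + nd*da*v^+3
  = (da*dd*v^+3) * ((na/da)*(u/v)^+3 + 0*(u/v)^+2 + n*(u/v) + nd/dd).
Proof. by move=> *; field; apply/and3P; split. Qed.

Lemma MP1 (a d : rat) : a != 0 -> d != 0 ->
  exists n : rat, (forall r, a*r^+3+0*r^+2+n*r+d != 0) /\ disc a 0 n d < 0.
Proof.
move=> a0 d0.
pose K : nat := (`|numq d|).+1.
pose nI : int := numq a * K%:Z.
pose n : rat := nI%:~R.
have K0 : (0 < K)%N by [].
have nE : n = nI%:~R by [].
have nIE : nI = numq a * K%:Z by [].
have KE : K = (`|numq d|).+1 by [].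
clearbody n nI K.
have an : 0 < a * n.
  rewrite nE nIE intrM -pmulrn mulrA numqE mulrA -expr2.
  by rewrite mulr_gt0 ?ltr0n // mulr_gt0 ?exprn_even_gt0 ?ltr0z ?denq_gt0.
exists n; split.
- move=> r; apply/negP => /eqP hr.
  have r0 : r != 0.
    apply/eqP => r0; move/eqP: d0; apply; rewrite -hr r0.
    by rewrite !expr0n /= !mulr0 ?mul0r !add0r.
  have eqZ : numq a * denq d * (numq r)^+3 + nI * denq a * denq d * numq r * (denq r)^+2 + numq d * denq a * (denq r)^+3 = 0.
    apply/eqP; rewrite -(intr_eq0 rat) !(intrD, intrM).
    have KI := @key2 rat (numq a)%:~R (denq a)%:~R (numq d)%:~R (denq d)%:~R
       (numq r)%:~R (denq r)%:~R n.
    rewrite !divq_num_den hr mulr0 in KI.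
    apply/eqP; apply: (etrans _ (KI _ _ _)); rewrite ?intr_eq0 ?denq_neq0 //.
    rewrite nE; ring.
  have hdiv : (`|denq r| <= `|numq a| * `|denq d|)%N.
    apply: dvdn_leq; first by rewrite muln_gt0 !absz_gt0 numq_eq0 a0 denq_neq0.
    have : (denq r %| numq a * denq d * (numq r)^+3)%Z.
      have -> : numq a * denq d * (numq r)^+3 = - (denq r * (nI * denq a * denq d * numq r * denq r + numq d * denq a * (denq r)^+2)).
        by apply/eqP; rewrite -subr_eq0 opprK -eqZ; apply/eqP; ring.
      by rewrite rpredN dvdz_mulr // dvdzz.
    have cu : coprime `|denq r| (`|numq r| * (`|numq r| * `|numq r|)).
      by rewrite !coprimeMr andbb coprime_sym coprime_num_den.
    by rewrite dvdzE !abszM Gauss_dvdl.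
  have hb : `|r| * `|n| <= `|d|.
    have -> : d = -(r * (a*r^+2 + n)) by apply/eqP; rewrite -subr_eq0 opprK -hr; apply/eqP; ring.
    rewrite normrN normrM ler_wpM2l ?normr_ge0 // norm_same //.
    have -> : a * r ^+ 2 * n = (a * n) * r ^+ 2 by ring.
    by rewrite mulr_ge0 ?sqr_ge0 // ltW.
  have e1 : `|r| * (denq r)%:~R = `|(numq r)%:~R : rat|.
    by rewrite numqE normrM [`|(denq r)%:~R|]ger0_norm // ler0z ltW // denq_gt0.
  have U1 : 1 <= `|(numq r)%:~R : rat|.
    by rewrite -intr_norm ler1z -abszE lez_nat absz_gt0 numq_eq0.
  have hv : (denq r)%:~R <= (`|numq a| * `|denq d|)%N%:R :> rat.
    by rewrite -absz_denq -pmulrn ler_nat.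
  have hn : `|n| = (`|numq a|%N)%:R * K%:R.
    rewrite nE nIE intrM normrM -pmulrn normr_nat; congr (_ * _).
    by rewrite pmulrn abszE intr_norm.
  have hd : `|d| * (`|denq d|%N)%:R = (`|numq d|%N)%:R.
    have -> : (`|denq d|%N)%:R = (denq d)%:~R :> rat by rewrite pmulrn absz_denq.
    have -> : (`|numq d|%N)%:R = `|(numq d)%:~R : rat| by rewrite pmulrn abszE intr_norm.
    by rewrite numqE normrM [`|(denq d)%:~R|]ger0_norm // ler0z ltW // denq_gt0.
  have hK : (K%:R : rat) = (`|numq d|%N)%:R + 1 by rewrite KE -addn1 natrD.
  rewrite natrM in hv.
  have R0 : 0 <= `|r| by rewrite normr_ge0.
  have DD0 : (0 : rat) <= (`|denq d|%N)%:R by rewrite ler0n.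
  have KK0 : (0 : rat) <= K%:R by rewrite ler0n.
  move: (`|r|) (`|n|) (`|d|) ((denq r)%:~R : rat) (`|(numq r)%:~R : rat|)
    ((`|numq a|%N)%:R : rat) ((`|denq d|%N)%:R : rat) ((`|numq d|%N)%:R : rat) (K%:R : rat)
    hb e1 U1 hv hn hd hK R0 DD0 KK0.
  clear.
  move=> R N Dd V U NA DD ND KK hb e1 U1 hv hn hd hK R0 DD0 KK0.
  have p1 : 0 <= KK * (U - 1) by rewrite mulr_ge0 // subr_ge0.
  have p2 : 0 <= KK * R * (NA * DD - V) by rewrite mulr_ge0 ?mulr_ge0 // subr_ge0.
  have p3 : 0 <= DD * (Dd - R * N) by rewrite mulr_ge0 // subr_ge0.
  rewrite hn in p3.
  have q : KK * U = KK * R * V by rewrite -e1 mulrA.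
  have q2 : DD * Dd = ND by rewrite mulrC.
  exact: (mp_bound p1 p2 p3 q q2 hK).
- have n0 : n != 0 by apply: contraTneq an => ->; rewrite mulr0 ltxx.
  have eqd : disc a 0 n d = -(4%:R * (a * n) * n^+2) - 27%:R * a^+2 * d^+2.
    by rewrite /disc; ring.
  rewrite eqd.
  have h1 : 0 < 4%:R * (a * n) * n^+2.
    by apply: mulr_gt0; [apply: mulr_gt0; rewrite ?ltr0n | rewrite exprn_even_gt0].
  have h2 : 0 <= 27%:R * a^+2 * d^+2.
    by apply: mulr_ge0; [apply: mulr_ge0; [rewrite ler0n | exact: sqr_ge0] | exact: sqr_ge0].
  exact: neg_sum h1 h2.
Qed.

Lemma EP3 (b c d : rat) : d != 0 ->
  exists A : rat, [/\ A != 0, (forall r, A*r^+3+b*r^+2+c*r+d != 0) & disc A b c d < 0].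
Proof.
move=> d0; have [D [D0 nr dn]] := EP0 c b d0.
exists D; split; first exact: D0.
- move=> r; apply/negP => /eqP hr.
  have r0 : r != 0.
    apply/eqP => r0; move/eqP: d0; apply; rewrite -hr r0.
    by rewrite !expr0n /= !mulr0 ?mul0r !add0r.
  have e : d*(r^-1)^+3 + c*(r^-1)^+2 + b*r^-1 + D = (D*r^+3+b*r^+2+c*r+d) / r^+3.
    by field; rewrite r0.
  by move: (nr r^-1); rewrite e hr mul0r eqxx.
- by have -> : disc D b c d = disc d c b D by rewrite /disc; ring.
Qed.

Lemma finish (s : state) (a b c d : rat) :
  s (@Ordinal 4 3 isT) = Some a -> s (@Ordinal 4 2 isT) = Some b ->
  s (@Ordinal 4 1 isT) = Some c -> s (@Ordinal 4 0 isT) = Some d ->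
  a != 0 -> (forall r, a*r^+3+b*r^+2+c*r+d != 0) -> disc a b c d < 0 ->
  ~ has_root_in_abelian_ext (state_poly s).
Proof.
move=> h3 h2 h1 h0 a0 nr dn.
have -> : state_poly s = a%:P*'X^3 + b%:P*'X^2 + c%:P*'X + d%:P.
  rewrite /state_poly !big_ord_recl big_ord0.
  have -> : (lift ord0 (lift ord0 (lift ord0 ord0)) : 'I_4) = @Ordinal 4 3 isT by apply: val_inj.
  have -> : (lift ord0 (lift ord0 ord0) : 'I_4) = @Ordinal 4 2 isT by apply: val_inj.
  have -> : (lift ord0 ord0 : 'I_4) = @Ordinal 4 1 isT by apply: val_inj.
  have -> : (ord0 : 'I_4) = @Ordinal 4 0 isT by apply: val_inj.
  rewrite h0 h1 h2 h3 /= addr0 expr0 expr1 mulr1; ring.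
exact: no_abelian.
Qed.


Theorem lemma15 :
  forall (i1 : 'I_4) (c1 : rat), legal_move init_state i1 c1 ->
  let s1 := play init_state i1 c1 in
  exists (i2 : 'I_4) (c2 : rat), legal_move s1 i2 c2 /\
  let s2 := play s1 i2 c2 in
  forall (i3 : 'I_4) (c3 : rat), legal_move s2 i3 c3 ->
  let s3 := play s2 i3 c3 in
  exists (i4 : 'I_4) (c4 : rat), legal_move s3 i4 c4 /\
  ~ has_root_in_abelian_ext (state_poly (play s3 i4 c4)).
Proof.
move=> i1 c1 [_ Hc1]; cbv zeta.
case: i1 Hc1 => [[|[|[|[|k]]]] Hi] Hc1; last by [].
-
  exists (@Ordinal 4 2 isT), 0; split; first by split.
  cbv zeta; move=> i3 c3 [Hs3 Hc3].
  case: i3 Hs3 Hc3 => [[|[|[|[|k]]]] Hi3] Hs3 Hc3; try by [].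
  + have [A [A0 nr dn]] := EP3 0 c3 (Hc1 isT).
    exists (@Ordinal 4 3 isT), A; split; first by split=> // _.
    by apply: (finish _ _ _ _ A0 nr dn).
  + have [n [nr dn]] := MP1 (Hc3 isT) (Hc1 isT).
    exists (@Ordinal 4 1 isT), n; split; first by split.
    by apply: (finish _ _ _ _ (Hc3 isT) nr dn).
-
  exists (@Ordinal 4 2 isT), 0; split; first by split.
  cbv zeta; move=> i3 c3 [Hs3 Hc3].
  case: i3 Hs3 Hc3 => [[|[|[|[|k]]]] Hi3] Hs3 Hc3; try by [].
  + have [A [A0 nr dn]] := EP3 0 c1 (Hc3 isT).
    exists (@Ordinal 4 3 isT), A; split; first by split=> // _.
    by apply: (finish _ _ _ _ A0 nr dn).
  + have [D [D0 nr dn]] := EP0 0 c1 (Hc3 isT).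
    exists (@Ordinal 4 0 isT), D; split; first by split=> // _.
    by apply: (finish _ _ _ _ (Hc3 isT) nr dn).
-
  exists (@Ordinal 4 1 isT), 0; split; first by split.
  cbv zeta; move=> i3 c3 [Hs3 Hc3].
  case: i3 Hs3 Hc3 => [[|[|[|[|k]]]] Hi3] Hs3 Hc3; try by [].
  + have [A [A0 nr dn]] := EP3 c1 0 (Hc3 isT).
    exists (@Ordinal 4 3 isT), A; split; first by split=> // _.
    by apply: (finish _ _ _ _ A0 nr dn).
  + have [D [D0 nr dn]] := EP0 c1 0 (Hc3 isT).
    exists (@Ordinal 4 0 isT), D; split; first by split=> // _.
    by apply: (finish _ _ _ _ (Hc3 isT) nr dn).
-
  exists (@Ordinal 4 2 isT), 0; split; first by split.
  cbv zeta; move=> i3 c3 [Hs3 Hc3].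
  case: i3 Hs3 Hc3 => [[|[|[|[|k]]]] Hi3] Hs3 Hc3; try by [].
  + have [n [nr dn]] := MP1 (Hc1 isT) (Hc3 isT).
    exists (@Ordinal 4 1 isT), n; split; first by split.
    by apply: (finish _ _ _ _ (Hc1 isT) nr dn).
  + have [D [D0 nr dn]] := EP0 0 c3 (Hc1 isT).
    exists (@Ordinal 4 0 isT), D; split; first by split=> // _.
    by apply: (finish _ _ _ _ (Hc1 isT) nr dn).
Qed.
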